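(* Let $(G,\prec)$ be a POP-graph. (1) For every $i\in I(G)$ and $e\in E(G)\setminus I(G)$: $i^-(e)\preceq i\preceq i^+(e)$ if and only if $i\to e$. (2) For every $o\in O(G)$ and $e\in E(G)\setminus O(G)$: $o^-(e)\preceq o\preceq o^+(e)$ if and only if $e\to o$.
   Context: A progressive graph is a finite directed acyclic graph (parallel edges allowed) in which every source and every sink has degree one; degree-one vertices are boundary vertices. $I(G)$ is the set of input edges (initial vertex a boundary vertex), $O(G)$ the set of output edges (terminal vertex a boundary vertex). For edges write $e\to e'$ if $e\neq e'$ and there is a directed path whose first edge is $e$ and last edge is $e'$. A planar order on $G$ is a linear order $\prec$ on $E(G)$ such that (P1) $e_1\to e_2$ implies $e_1\prec e_2$; (P2) if $e_1\prec e_2\prec e_3$ and $e_1\to e_3$ then $e_1\to e_2$ or $e_2\to e_3$. A POP-graph is a progressive graph with a planar order. For an edge $e$, $i^-(e)$ and $i^+(e)$ are the $\prec$-minimum and $\prec$-maximum of $\{i\in I(G): i\to e\}$, and $o^-(e)$, $o^+(e)$ are the $\prec$-minimum and $\prec$-maximum of $\{o\in O(G): e\to o\}$. *)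

(* Defs.v *)
From mathcomp Require Import all_boot.
Set Implicit Arguments. Unset Strict Implicit. Unset Printing Implicit Defensive.

(* A finite directed graph (parallel edges allowed) is given by finite types of
   vertices V and edges E with source/target maps src, tgt : E -> V. *)
Section POP.
Variables (V E : finType) (src tgt : E -> V).

Definition indeg (v : V) : nat := #|[pred e | tgt e == v]|.
Definition outdeg (v : V) : nat := #|[pred e | src e == v]|.
Definition deg (v : V) : nat := indeg v + outdeg v.
Definition boundary (v : V) : bool := deg v == 1.

Definition succ_rel : rel E := fun a b => tgt a == src b.

Definition arrow (e e' : E) : bool := (e != e') && connect succ_rel e e'.

Definition acyclic : Prop :=
  forall e1 e2, succ_rel e1 e2 -> ~~ connect succ_rel e2 e1.

Definition progressive : Prop :=
  [/\ acyclic,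
      (forall v, indeg v = 0 -> deg v = 1) &
      (forall v, outdeg v = 0 -> deg v = 1)].

Definition is_input (e : E) : bool := boundary (src e).
Definition is_output (e : E) : bool := boundary (tgt e).

Variable le : rel E.

Definition linear_order : Prop :=
  [/\ reflexive le, antisymmetric le, transitive le & total le].

Definition lt (e e' : E) : bool := (e != e') && le e e'.

Definition planar_order : Prop :=
  [/\ linear_order,
      (forall e1 e2, arrow e1 e2 -> lt e1 e2) &
      (forall e1 e2 e3, lt e1 e2 -> lt e2 e3 -> arrow e1 e3 ->
          arrow e1 e2 || arrow e2 e3)].

Definition in_pred (e : E) : pred E := [pred i | is_input i && arrow i e].
Definition out_pred (e : E) : pred E := [pred o | is_output o && arrow e o].

Definition min_of (P : pred E) : option E :=
  [pick x | P x && [forall y, P y ==> le x y]].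
Definition max_of (P : pred E) : option E :=
  [pick x | P x && [forall y, P y ==> le y x]].

Definition i_minus e := min_of (in_pred e).
Definition i_plus e := max_of (in_pred e).
Definition o_minus e := min_of (out_pred e).
Definition o_plus e := max_of (out_pred e).

Definition between (a b : option E) (x : E) : bool :=
  match a, b with
  | Some a, Some b => le a x && le x b
  | _, _ => false
  end.
End POP.

(* Main.v *)
Require Import Defs.
From mathcomp Require Import all_boot.
From mathcomp Require Import zify.

Lemma ex_min (T : finType) (r : rel T) (P : pred T) x :
  reflexive r -> transitive r -> total r -> P x ->
  exists m, P m && [forall y, P y ==> r m y].
Proof.
move=> Hr Ht Htot Px.
case Hs: (sort r (enum P)) => [|m s].
  have: x \in sort r (enum P) by rewrite mem_sort mem_enum.
  by rewrite Hs.
have Hsort : sorted r (m :: s) by rewrite -Hs sort_sorted.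
exists m.
have: m \in sort r (enum P) by rewrite Hs mem_head.
rewrite mem_sort mem_enum => Pm; apply/andP; split; first exact: Pm.
apply/forallP => y; apply/implyP => Py.
have: y \in m :: s by rewrite -Hs mem_sort mem_enum; exact: Py.
rewrite in_cons => /predU1P [->|ys]; first exact: Hr.
have /allP := order_path_min Ht Hsort; exact.
Qed.

Lemma min_some (V E : finType) (src tgt : E -> V) (le : rel E) (P : pred E) x :
  reflexive le -> transitive le -> total le -> P x ->
  exists m, min_of le P = Some m /\ P m /\ (forall y, P y -> le m y).
Proof.
move=> Hr Ht Htot Px; rewrite /min_of; case: pickP => [m /andP[Pm /forallP H]|H0].
  by exists m; split=> //; split=> // y Py; move/implyP: (H y); apply.
have [m Hm] := ex_min _ _ _ _ Hr Ht Htot Px.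
by rewrite H0 in Hm.
Qed.

Lemma max_some (V E : finType) (src tgt : E -> V) (le : rel E) (P : pred E) x :
  reflexive le -> transitive le -> total le -> P x ->
  exists m, max_of le P = Some m /\ P m /\ (forall y, P y -> le y m).
Proof.
move=> Hr Ht Htot Px; rewrite /max_of; case: pickP => [m /andP[Pm /forallP H]|H0].
  by exists m; split=> //; split=> // y Py; move/implyP: (H y); apply.
have Hr' : reflexive (fun a b => le b a) by move=> a; apply: Hr.
have Ht' : transitive (fun a b => le b a).
  by move=> y a z /= h1 h2; apply: Ht h2 h1.
have Htot' : total (fun a b => le b a) by move=> a b /=; rewrite orbC.
have [m Hm] := ex_min _ _ _ _ Hr' Ht' Htot' Px.
by rewrite H0 in Hm.
Qed.

Lemma min_spec (E : finType) (le : rel E) (P : pred E) m :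
  min_of le P = Some m -> P m.
Proof. by rewrite /min_of; case: pickP => [m' /andP[Pm _] [<-]|]. Qed.

Lemma max_spec (E : finType) (le : rel E) (P : pred E) m :
  max_of le P = Some m -> P m.
Proof. by rewrite /max_of; case: pickP => [m' /andP[Pm _] [<-]|]. Qed.

Lemma no_into (V E : finType) (src tgt : E -> V) a i :
  is_input src tgt i -> arrow src tgt a i -> False.
Proof.
rewrite /is_input /boundary /deg => Hb /andP[neq /connectP[p]].
case/lastP: p => [|q z] /=.
  by move=> _ Hl; rewrite Hl eqxx in neq.
rewrite rcons_path last_rcons => /andP[_ Hs] Hz; subst z.
have h1: 0 < indeg tgt (src i).
  by apply/card_gt0P; exists (last a q); rewrite inE.
have h2: 0 < outdeg src (src i).
  by apply/card_gt0P; exists i; rewrite inE.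
move/eqP: Hb; lia.
Qed.

Lemma no_out (V E : finType) (src tgt : E -> V) o b :
  is_output src tgt o -> arrow src tgt o b -> False.
Proof.
rewrite /is_output /boundary /deg => Hb /andP[neq /connectP[p]].
case: p => [|z q] /=.
  by move=> _ Hl; rewrite Hl eqxx in neq.
move=> /andP[Hs _] _.
have h1: 0 < indeg tgt (tgt o).
  by apply/card_gt0P; exists o; rewrite inE.
have h2: 0 < outdeg src (tgt o).
  by apply/card_gt0P; exists z; rewrite inE eq_sym.
move/eqP: Hb; lia.
Qed.

Theorem lemma3p2 (V E : finType) (src tgt : E -> V) (le : rel E)
  (Hprog : progressive src tgt) (Hplan : planar_order src tgt le) :
  (forall i e : E, is_input src tgt i -> ~~ is_input src tgt e ->
     (between le (i_minus src tgt le e) (i_plus src tgt le e) i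
      <-> arrow src tgt i e)) /\
  (forall o e : E, is_output src tgt o -> ~~ is_output src tgt e ->
     (between le (o_minus src tgt le e) (o_plus src tgt le e) o
      <-> arrow src tgt e o)).
Proof.
case: Hplan => [[Hr Ha Ht Htot] P1 P2].
split.
- move=> i e Hi He; split.
  + rewrite /between /i_minus /i_plus.
    case Hmn: (min_of _ _) => [a|] //; case Hmx: (max_of _ _) => [b|] // => /andP[Hai Hib].
    move/min_spec: Hmn => /andP[Ia Aa]; move/max_spec: Hmx => /andP[Ib Ab].
    have [/eqP->//|nia] := boolP (i == a).
    have [/eqP->//|nib] := boolP (i == b).
    have nie : i != e by apply/eqP => Hie; rewrite -Hie Hi in He.
    case/orP: (Htot i e) => Hle.
    * have := P2 a i e; rewrite /lt eq_sym nia Hai nie Hle => /(_ erefl erefl Aa).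
      by case/orP=> // /no_into; move/(_ Hi).
    * move: (P1 b e Ab); rewrite /lt => /andP[nbe Hbe].
      have Heb : le e b by apply: Ht Hib.
      have := Ha b e; rewrite Hbe Heb => /(_ erefl) Hbe'.
      by rewrite -Hbe' Ib in He.
  + move=> Aie.
    have Pi : in_pred src tgt e i by rewrite /in_pred inE Hi Aie.
    rewrite /i_minus /i_plus /o_minus /o_plus.
    have [a [-> [_ Ha']]] := min_some V E src tgt le _ _ Hr Ht Htot Pi.
    have [b [-> [_ Hb']]] := max_some V E src tgt le _ _ Hr Ht Htot Pi.
    by rewrite /between Ha' ?Hb'.
- move=> o e Ho He; split.
  + rewrite /between /o_minus /o_plus.
    case Hmn: (min_of _ _) => [a|] //; case Hmx: (max_of _ _) => [b|] // => /andP[Hao Hob].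
    move/min_spec: Hmn => /andP[Oa Aa]; move/max_spec: Hmx => /andP[Ob Ab].
    have [/eqP->//|noa] := boolP (o == a).
    have [/eqP->//|nob] := boolP (o == b).
    have noe : e != o by apply/eqP => Hoe; rewrite Hoe Ho in He.
    case/orP: (Htot e o) => Hle.
    * have := P2 e o b; rewrite /lt noe nob Hob Hle => /(_ erefl erefl Ab).
      by case/orP=> // /no_out; move/(_ Ho).
    * move: (P1 e a Aa); rewrite /lt => /andP[nea Hea].
      have Hae : le a e by apply: Ht Hle.
      have := Ha a e; rewrite Hea Hae => /(_ erefl) Hae'.
      by rewrite -Hae' Oa in He.
  + move=> Aeo.
    have Po : out_pred src tgt e o by rewrite /out_pred inE Ho Aeo.
    rewrite /i_minus /i_plus /o_minus /o_plus.
    have [a [-> [_ Ha']]] := min_some V E src tgt le _ _ Hr Ht Htot Po.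
    have [b [-> [_ Hb']]] := max_some V E src tgt le _ _ Hr Ht Htot Po.
    by rewrite /between Ha' ?Hb'.
Qed.
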